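(* Let $(X,T)$ be a topological dynamical system, $x_0\in X$, $E\subset X$ a clopen set, and $A=\{n\in\mathbb{N}\colon T^nx_0\in E\}$. Equip $X\times X$ with $T\times T$. Let $x_1\in X$ and let $\nu$ be a Borel probability measure on $X\times X$ such that $(x_0,x_1)$ is generic for $\nu$ along some Følner sequence $\Phi=(\Phi_N)$. Assume there exist $\varepsilon>0$ and a sequence of integers $(m_i)$ with $m_i\to\infty$ such that $T^{m_i}x_0\to x_1$ as $i\to\infty$ and $\nu(T^{-m_i}E\times E)\ge\varepsilon$ for every $i$. Then there exist infinite subsets $B,C\subset\mathbb{N}$ with $B+C\subset A$; moreover one can take $B\subset\{m_i\colon i\ge1\}$ and $C\subset\{\ell\in\mathbb{N}\colon T^\ell x_1\in E\}$.
   Context: A topological dynamical system $(X,T)$ is a compact metric space $X$ with a continuous surjection $T\colon X\to X$. Convention: $\mathbb{N}=\{0,1,2,\dots\}$. A Følner sequence is a sequence $\Phi=(\Phi_N)_{N\ge1}$ of intervals of $\mathbb{N}$ whose lengths tend to $\infty$. For a system $(Y,R)$, a point $y\in Y$ and a probability measure $\mu$ on $Y$, $y$ is generic for $\mu$ along $\Phi$ if $\frac{1}{|\Phi_N|}\sum_{n\in\Phi_N}f(R^ny)\to\int f\,d\mu$ as $N\to\infty$ for every continuous $f\colon Y\to\mathbb{C}$. $B+C=\{b+c\colon b\in B,c\in C\}$. *)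

(* Defs.v *)
From Stdlib Require Import Reals Lra Lia List Classical ClassicalEpsilon.
Open Scope R_scope.

Definition is_metric {X : Type} (d : X -> X -> R) : Prop :=
  (forall x y, 0 <= d x y) /\ (forall x y, d x y = 0 <-> x = y) /\
  (forall x y, d x y = d y x) /\ (forall x y z, d x z <= d x y + d y z).

Definition converges {X : Type} (d : X -> X -> R) (u : nat -> X) (l : X) : Prop :=
  forall eps, 0 < eps -> exists N, forall n, (N <= n)%nat -> d (u n) l < eps.

Definition seq_compact {X : Type} (d : X -> X -> R) : Prop :=
  forall u : nat -> X, exists phi : nat -> nat,
    (forall n, (phi n < phi (S n))%nat) /\ exists l, converges d (fun n => u (phi n)) l.

Definition continuous_map {X Y : Type} (dX : X -> X -> R) (dY : Y -> Y -> R)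
  (f : X -> Y) : Prop :=
  forall x eps, 0 < eps -> exists delta, 0 < delta /\
    forall y, dX x y < delta -> dY (f x) (f y) < eps.

Definition tds {X : Type} (d : X -> X -> R) (T : X -> X) : Prop :=
  is_metric d /\ seq_compact d /\ continuous_map d d T /\ (forall y, exists x, T x = y).

Definition is_open {X : Type} (d : X -> X -> R) (U : X -> Prop) : Prop :=
  forall x, U x -> exists r, 0 < r /\ forall y, d x y < r -> U y.
Definition is_closed {X : Type} (d : X -> X -> R) (F : X -> Prop) : Prop :=
  is_open d (fun x => ~ F x).
Definition is_clopen {X : Type} (d : X -> X -> R) (E : X -> Prop) : Prop :=
  is_open d E /\ is_closed d E.

(* product space X x X with the max metric (inducing the product topology) *)
Definition dprod {X : Type} (d : X -> X -> R) (p q : X * X) : R :=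
  Rmax (d (fst p) (fst q)) (d (snd p) (snd q)).
Definition Tprod {X : Type} (T : X -> X) (p : X * X) : X * X := (T (fst p), T (snd p)).

Definition dR (a b : R) : R := Rabs (a - b).

Definition sigma_algebra {X : Type} (S : (X -> Prop) -> Prop) : Prop :=
  S (fun _ => True) /\ (forall A, S A -> S (fun x => ~ A x)) /\
  (forall An : nat -> X -> Prop, (forall n, S (An n)) -> S (fun x => exists n, An n x)).

Definition borel {X : Type} (d : X -> X -> R) (A : X -> Prop) : Prop :=
  forall S, sigma_algebra S -> (forall U, is_open d U -> S U) -> S A.

Definition borel_prob_measure {X : Type} (d : X -> X -> R) (mu : (X -> Prop) -> R) : Prop :=
  (forall A, borel d A -> 0 <= mu A) /\ mu (fun _ => True) = 1 /\
  (forall An : nat -> X -> Prop, (forall n, borel d (An n)) ->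
     (forall i j x, i <> j -> An i x -> An j x -> False) ->
     infinite_sum (fun n => mu (An n)) (mu (fun x => exists n, An n x))).

Definition ind {X : Type} (A : X -> Prop) (x : X) : R :=
  if excluded_middle_informative (A x) then 1 else 0.

(* values of integrals of nonnegative Borel simple functions below f *)
Definition simple_lower_sums {X : Type} (d : X -> X -> R) (mu : (X -> Prop) -> R)
  (f : X -> R) (v : R) : Prop :=
  exists l : list (R * (X -> Prop)),
    Forall (fun p => 0 <= fst p /\ borel d (snd p)) l /\
    (forall x, fold_right (fun p acc => fst p * ind (snd p) x + acc) 0 l <= f x) /\
    v = fold_right (fun p acc => fst p * mu (snd p) + acc) 0 l.

Definition is_integral {X : Type} (d : X -> X -> R) (mu : (X -> Prop) -> R)
  (f : X -> R) (I : R) : Prop :=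
  exists p q, is_lub (simple_lower_sums d mu (fun x => Rmax (f x) 0)) p /\
              is_lub (simple_lower_sums d mu (fun x => Rmax (- f x) 0)) q /\ I = p - q.

(* Phi_N = [a N, b N) with length b N - a N -> infinity *)
Definition folner (a b : nat -> nat) : Prop :=
  (forall N, (a N <= b N)%nat) /\
  (forall M, exists N0, forall N, (N0 <= N)%nat -> (M <= b N - a N)%nat).

Definition sum_range (g : nat -> R) (start len : nat) : R :=
  fold_right Rplus 0 (map g (seq start len)).

Definition generic {Y : Type} (dY : Y -> Y -> R) (S : Y -> Y) (y : Y)
  (mu : (Y -> Prop) -> R) (a b : nat -> nat) : Prop :=
  forall f : Y -> R, continuous_map dY dR f ->
    exists I, is_integral dY mu f I /\
      Un_cv (fun N => / INR (b N - a N) * sum_range (fun n => f (Nat.iter n S y)) (a N) (b N - a N)) I.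

(* Main.v *)
Require Import Defs.
From Stdlib Require Import Reals Lra Lia List Classical ClassicalEpsilon FunctionalExtensionality PropExtensionality.
Open Scope R_scope.

Lemma set_ext {Y : Type} (A B : Y -> Prop) : (forall x, A x <-> B x) -> A = B.
Proof. intro H; apply functional_extensionality; intro x; apply propositional_extensionality; auto. Qed.

Lemma sa_ext {Y : Type} (S : (Y -> Prop) -> Prop) A B : S A -> (forall x, A x <-> B x) -> S B.
Proof. intros H E; rewrite <- (set_ext A B E); exact H. Qed.

Lemma borel_ext {Y : Type} (d : Y -> Y -> R) A B : borel d A -> (forall x, A x <-> B x) -> borel d B.
Proof. intros H E; rewrite <- (set_ext A B E); exact H. Qed.

Lemma borel_open {Y : Type} (d : Y -> Y -> R) U : is_open d U -> borel d U.
Proof. intros H S _ HS; auto. Qed.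

Lemma borel_compl {Y : Type} (d : Y -> Y -> R) A : borel d A -> borel d (fun x => ~ A x).
Proof. intros H S HS Ho. pose proof HS as [_ [Hc _]]. apply Hc. apply H; auto. Qed.

Lemma borel_union {Y : Type} (d : Y -> Y -> R) (An : nat -> Y -> Prop) :
  (forall n, borel d (An n)) -> borel d (fun x => exists n, An n x).
Proof. intros H S HS Ho. pose proof HS as [_ [_ Hu]]. apply Hu; intro n; apply H; auto. Qed.

Lemma borel_True {Y : Type} (d : Y -> Y -> R) : borel d (fun _ => True).
Proof. intros S HS _; apply HS. Qed.

Lemma borel_False {Y : Type} (d : Y -> Y -> R) : borel d (fun _ => False).
Proof. eapply borel_ext. apply borel_compl, borel_True. intro; tauto. Qed.

Lemma borel_inter {Y : Type} (d : Y -> Y -> R) (An : nat -> Y -> Prop) :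
  (forall n, borel d (An n)) -> borel d (fun x => forall n, An n x).
Proof.
  intro H. eapply borel_ext. apply borel_compl, borel_union. intro n; apply borel_compl, H.
  intro x; split. intros H1 n. apply NNPP; intro; apply H1; eauto.
  intros H1 [n Hn]; auto.
Qed.

Lemma borel_and {Y : Type} (d : Y -> Y -> R) A B : borel d A -> borel d B -> borel d (fun x => A x /\ B x).
Proof.
  intros HA HB. eapply borel_ext. apply (borel_inter d (fun n x => match n with 0 => A x | _ => B x end)).
  intros [|n]; auto. intro x; split. intro H; split; [apply (H 0%nat)|apply (H 1%nat)].
  intros [H1 H2] [|n]; auto.
Qed.

Lemma borel_andP {Y : Type} (d : Y -> Y -> R) (P : Prop) B : borel d B -> borel d (fun x => P /\ B x).
Proof.
  intro HB. destruct (classic P) as [HP|HP].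
  - eapply borel_ext; [exact HB|]. intro; tauto.
  - eapply borel_ext; [apply borel_False|]. intro; tauto.
Qed.

Lemma borel_or {Y : Type} (d : Y -> Y -> R) A B : borel d A -> borel d B -> borel d (fun x => A x \/ B x).
Proof.
  intros HA HB. eapply borel_ext. apply (borel_union d (fun n x => match n with 0 => A x | _ => B x end)).
  intros [|n]; auto. intro x; split. intros [[|n] H]; auto.
  intros [H|H]; [exists 0%nat|exists 1%nat]; auto.
Qed.

Lemma sum_const (c : R) n : sum_f_R0 (fun _ => c) n = INR (S n) * c.
Proof. induction n; simpl sum_f_R0. simpl; ring. rewrite IHn, !S_INR; ring. Qed.

Lemma m_empty {Y : Type} (d : Y -> Y -> R) mu : borel_prob_measure d mu -> mu (fun _ => False) = 0.
Proof.
  intros [Hpos [_ Hadd]].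
  pose proof (Hadd (fun _ _ => False) (fun _ => borel_False d) (fun i j x _ H _ => H)) as H.
  rewrite (set_ext (fun x => exists n:nat, False) (fun _ => False)) in H by (intro; split; [intros [_ []]|tauto]).
  set (c := mu (fun _ => False)) in *.
  assert (Hc : 0 <= c) by (apply Hpos, borel_False).
  destruct (Rle_lt_or_eq_dec _ _ Hc) as [Hlt|]; [|auto].
  exfalso. destruct (H c Hlt) as [N HN]. specialize (HN (S N) ltac:(lia)).
  rewrite sum_const in HN. unfold Rdist in HN. rewrite !S_INR in HN.
  pose proof (pos_INR N). rewrite Rabs_right in HN by nra. nra.
Qed.

Lemma m_add2 {Y : Type} (d : Y -> Y -> R) mu A B : borel_prob_measure d mu ->
  borel d A -> borel d B -> (forall x, A x -> B x -> False) ->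
  mu (fun x => A x \/ B x) = mu A + mu B.
Proof.
  intros Hmu HA HB Hd. pose proof Hmu as [Hpos [_ Hadd]].
  set (An := fun n x => match n with 0%nat => A x | 1%nat => B x | _ => False end).
  assert (H : infinite_sum (fun n => mu (An n)) (mu (fun x => exists n, An n x))).
  { apply Hadd. intros [|[|n]]; simpl; auto using borel_False.
    intros [|[|i]] [|[|j]] x Hij; simpl; try tauto; try lia; eauto. }
  rewrite (set_ext (fun x => exists n, An n x) (fun x => A x \/ B x)) in H.
  2:{ intro x; split. intros [[|[|n]] h]; simpl in h; tauto. intros [h|h]; [exists 0%nat|exists 1%nat]; auto. }
  apply (uniqueness_sum _ _ _ H). intros eps He. exists 1%nat. intros n Hn.
  assert (sum_f_R0 (fun n => mu (An n)) n = mu A + mu B) as ->.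
  { induction n. lia. destruct n. simpl. auto. simpl sum_f_R0 in *. rewrite IHn by lia.
    unfold An. rewrite (m_empty d mu Hmu). ring. }
  unfold Rdist; rewrite Rminus_diag, Rabs_R0; lra.
Qed.

Lemma m_nonneg {Y : Type} (d : Y -> Y -> R) mu A : borel_prob_measure d mu -> borel d A -> 0 <= mu A.
Proof. intros [H _] HA; auto. Qed.

Lemma m_mono {Y : Type} (d : Y -> Y -> R) mu A B : borel_prob_measure d mu ->
  borel d A -> borel d B -> (forall x, A x -> B x) -> mu A <= mu B.
Proof.
  intros Hmu HA HB Hs.
  rewrite (set_ext B (fun x => A x \/ (B x /\ ~ A x))).
  2:{ intro x; split; intro h. destruct (classic (A x)); tauto. destruct h as [h|[h _]]; auto. }
  rewrite m_add2 with (d := d); auto. pose proof (m_nonneg d mu (fun x => B x /\ ~ A x) Hmu (borel_and d _ _ HB (borel_compl d _ HA))). lra.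
  apply borel_and; auto using borel_compl. intros x h [_ h']; auto.
Qed.

Lemma m_compl {Y : Type} (d : Y -> Y -> R) mu A : borel_prob_measure d mu -> borel d A ->
  mu (fun x => ~ A x) = 1 - mu A.
Proof.
  intros Hmu HA. pose proof Hmu as [_ [H1 _]].
  rewrite <- H1. rewrite (set_ext (fun _ => True) (fun x => A x \/ ~ A x)) by (intro x; split; [intro; apply classic|auto]).
  rewrite m_add2 with (d := d); auto using borel_compl. ring.
Qed.

Lemma m_sub2 {Y : Type} (d : Y -> Y -> R) mu A B : borel_prob_measure d mu ->
  borel d A -> borel d B -> mu (fun x => A x \/ B x) <= mu A + mu B.
Proof.
  intros Hmu HA HB.
  rewrite (set_ext (fun x => A x \/ B x) (fun x => A x \/ (B x /\ ~ A x))).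
  2:{ intro x; destruct (classic (A x)); tauto. }
  rewrite m_add2 with (d := d); auto using borel_and, borel_compl.
  pose proof (m_mono d mu (fun x => B x /\ ~ A x) B Hmu (borel_and d _ _ HB (borel_compl d _ HA)) HB (fun x h => proj1 h)). lra.
  intros x h [_ h']; auto.
Qed.

Lemma borel_punion {Y : Type} (d : Y -> Y -> R) (Bn : nat -> Y -> Prop) n :
  (forall k, borel d (Bn k)) -> borel d (fun x => exists k, (k <= n)%nat /\ Bn k x).
Proof. intro H. apply borel_union. intro k. apply borel_andP; auto. Qed.

Lemma m_union_bound {Y : Type} (d : Y -> Y -> R) mu (Bn : nat -> Y -> Prop) c :
  borel_prob_measure d mu -> (forall k, borel d (Bn k)) ->
  (forall n, mu (fun x => exists k, (k <= n)%nat /\ Bn k x) <= c) ->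
  mu (fun x => exists n, Bn n x) <= c.
Proof.
  intros Hmu HB Hc. pose proof Hmu as [_ [_ Hadd]].
  set (D := fun n x => Bn n x /\ ~ exists k, (k < n)%nat /\ Bn k x).
  assert (HD : forall n, borel d (D n)).
  { intro n. apply borel_and; auto. apply borel_compl, borel_union. intro k; apply borel_andP; auto. }
  assert (Hdis : forall i j x, i <> j -> D i x -> D j x -> False).
  { intros i j x Hij [h1 h1'] [h2 h2']. destruct (Nat.lt_ge_cases i j). eauto. apply h1'; exists j; split; auto; lia. }
  pose proof (Hadd D HD Hdis) as Hs.
  rewrite (set_ext (fun x => exists n, D n x) (fun x => exists n, Bn n x)) in Hs.
  2:{ intro x; split. intros [n [h _]]; eauto. intros [n h]. revert h. induction n as [n IH] using (well_founded_induction Wf_nat.lt_wf).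
      intro h. destruct (classic (exists k, (k < n)%nat /\ Bn k x)) as [[k [hk hk']]|hn]. eauto. exists n; split; auto. }
  assert (Hp : forall n, sum_f_R0 (fun k => mu (D k)) n = mu (fun x => exists k, (k <= n)%nat /\ Bn k x)).
  { induction n.
    - simpl. f_equal. apply set_ext; intro x; split. intros [h _]; exists 0%nat; split; auto.
      intros [k [hk h]]. assert (k = 0%nat) by lia; subst. split; auto. intros [j [hj _]]; lia.
    - simpl sum_f_R0. rewrite IHn. rewrite <- (m_add2 d mu); auto using borel_punion.
      + f_equal. apply set_ext; intro x; split.
        * intros [[k [hk h]]|[h _]]; eauto.
        * intros [k [hk h]]. destruct (classic (exists j, (j < S n)%nat /\ Bn j x)) as [[j [hj h']]|hn].
          left; exists j; split; auto; lia. assert (k = S n) by (destruct (Nat.eq_dec k (S n)); auto; exfalso; apply hn; exists k; split; auto; lia). subst.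
          right; split; auto.
      + intros x [k [hk h]] [_ h']. apply h'; exists k; split; auto; lia. }
  destruct (Rle_or_lt (mu (fun x => exists n, Bn n x)) c) as [|Hlt]; auto. exfalso.
  destruct (Hs (mu (fun x => exists n, Bn n x) - c) ltac:(lra)) as [N HN].
  specialize (HN N (le_n _)). rewrite Hp in HN. specialize (Hc N). unfold Rdist in HN.
  rewrite Rabs_left1 in HN; lra.
Qed.

Lemma m_null_union {Y : Type} (d : Y -> Y -> R) mu (Bn : nat -> Y -> Prop) :
  borel_prob_measure d mu -> (forall k, borel d (Bn k)) -> (forall k, mu (Bn k) <= 0) ->
  mu (fun x => exists n, Bn n x) <= 0.
Proof.
  intros Hmu HB H0. apply m_union_bound with (d := d); auto. induction n.
  - rewrite (set_ext _ (Bn 0%nat)); auto. intro x; split. intros [k [hk h]]; assert (k=0%nat) by lia; subst; auto. intro; exists 0%nat; auto.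
  - rewrite (set_ext _ (fun x => (exists k, (k <= n)%nat /\ Bn k x) \/ Bn (S n) x)).
    pose proof (m_sub2 d mu _ _ Hmu (borel_punion d Bn n HB) (HB (S n))). specialize (H0 (S n)). lra.
    intro x; split. intros [k [hk h]]. destruct (Nat.eq_dec k (S n)). subst; auto. left; exists k; split; auto; lia.
    intros [[k [hk h]]|h]; eauto.
Qed.

Lemma cont_comp {X Y Z : Type} dX dY dZ (f : X -> Y) (g : Y -> Z) :
  continuous_map dX dY f -> continuous_map dY dZ g -> continuous_map dX dZ (fun x => g (f x)).
Proof.
  intros Hf Hg x eps He. destruct (Hg (f x) eps He) as [d1 [Hd1 H1]].
  destruct (Hf x d1 Hd1) as [d2 [Hd2 H2]]. exists d2; split; auto.
Qed.

Lemma cont_iter {X : Type} (d : X -> X -> R) T n : continuous_map d d T -> continuous_map d d (Nat.iter n T).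
Proof.
  intro HT. induction n. intros x eps He; exists eps; split; auto.
  simpl. apply (cont_comp d d d (Nat.iter n T) T); auto.
Qed.

Lemma cont_fst {X : Type} (d : X -> X -> R) : continuous_map (dprod d) d (@fst X X).
Proof. intros x eps He; exists eps; split; auto. intros y Hy. unfold dprod in Hy. pose proof (Rmax_l (d (fst x) (fst y)) (d (snd x) (snd y))). lra. Qed.

Lemma cont_snd {X : Type} (d : X -> X -> R) : continuous_map (dprod d) d (@snd X X).
Proof. intros x eps He; exists eps; split; auto. intros y Hy. unfold dprod in Hy. pose proof (Rmax_r (d (fst x) (fst y)) (d (snd x) (snd y))). lra. Qed.

Lemma open_preim {X Y : Type} dX dY (f : Y -> X) U : continuous_map dY dX f -> is_open dX U -> is_open dY (fun y => U (f y)).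
Proof.
  intros Hf HU y Hy. destruct (HU _ Hy) as [r [Hr H]]. destruct (Hf y r Hr) as [dl [Hd H2]].
  exists dl; split; auto.
Qed.

Lemma clopen_preim {X Y : Type} dX dY (f : Y -> X) U : continuous_map dY dX f -> is_clopen dX U -> is_clopen dY (fun y => U (f y)).
Proof. intros Hf [H1 H2]; split. apply open_preim with dX; auto. unfold is_closed. apply (open_preim dX dY f (fun x => ~ U x)); auto. Qed.

Lemma clopen_and {Y : Type} (d : Y -> Y -> R) A B : is_clopen d A -> is_clopen d B -> is_clopen d (fun x => A x /\ B x).
Proof.
  intros [HA1 HA2] [HB1 HB2]; split.
  - intros x [ha hb]. destruct (HA1 x ha) as [r1 [Hr1 H1]]. destruct (HB1 x hb) as [r2 [Hr2 H2]].
    exists (Rmin r1 r2); split. apply Rmin_pos; auto. intros y Hy. split; [apply H1|apply H2].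
    pose proof (Rmin_l r1 r2); lra. pose proof (Rmin_r r1 r2); lra.
  - intros x hx. destruct (classic (A x)) as [ha|ha].
    + assert (hb : ~ B x) by tauto. destruct (HB2 x hb) as [r [Hr H]]. exists r; split; auto. intros y Hy [_ h]. apply (H y Hy h).
    + destruct (HA2 x ha) as [r [Hr H]]. exists r; split; auto. intros y Hy [h _]. apply (H y Hy h).
Qed.

Lemma clopen_True {Y : Type} (d : Y -> Y -> R) : is_clopen d (fun _ => True).
Proof. split. intros x _; exists 1; split; auto; lra. intros x h; tauto. Qed.

Lemma ind_cont {Y : Type} (d : Y -> Y -> R) G : is_clopen d G -> continuous_map d dR (Defs.ind G).
Proof.
  intros [H1 H2] x eps He. unfold Defs.ind.
  destruct (excluded_middle_informative (G x)) as [h|h].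
  - destruct (H1 x h) as [r [Hr H]]. exists r; split; auto. intros y Hy.
    destruct (excluded_middle_informative (G y)) as [h'|h']. unfold dR; rewrite Rminus_diag, Rabs_R0; auto. exfalso; auto.
  - destruct (H2 x h) as [r [Hr H]]. exists r; split; auto. intros y Hy.
    destruct (excluded_middle_informative (G y)) as [h'|h']. exfalso; apply (H y Hy h'). unfold dR; rewrite Rminus_diag, Rabs_R0; auto.
Qed.

Lemma ind_range {Y : Type} (G : Y -> Prop) x : 0 <= Defs.ind G x <= 1.
Proof. unfold Defs.ind; destruct (excluded_middle_informative (G x)); lra. Qed.

Lemma simple_zero {Y : Type} (d : Y -> Y -> R) mu (l : list (R * (Y -> Prop))) :
  borel_prob_measure d mu ->
  Forall (fun p => 0 <= fst p /\ borel d (snd p)) l ->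
  (forall x, fold_right (fun p acc => fst p * Defs.ind (snd p) x + acc) 0 l <= 0) ->
  fold_right (fun p acc => fst p * mu (snd p) + acc) 0 l <= 0.
Proof.
  intros Hmu. induction l as [|[c S] l IH]; simpl; intros HF Hx. lra.
  inversion HF as [|? ? [Hc HS] HF']; subst. simpl in Hc, HS.
  assert (Hnn : forall x, 0 <= fold_right (fun p acc => fst p * Defs.ind (snd p) x + acc) 0 l).
  { intro x. clear IH Hx HF. induction l as [|[c' S'] l IH']; simpl. lra. inversion HF' as [|? ? [Hc' _] HF'']; subst.
    simpl in Hc'. pose proof (ind_range S' x). specialize (IH' HF''). nra. }
  assert (Hr : forall x, fold_right (fun p acc => fst p * Defs.ind (snd p) x + acc) 0 l <= 0).
  { intro x. specialize (Hx x). pose proof (ind_range S x). nra. }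
  specialize (IH HF' Hr).
  assert (c * mu S = 0).
  { destruct (Req_dec c 0) as [->|Hc0]. ring.
    assert (mu S = 0) as ->; [|ring].
    rewrite (set_ext S (fun _ => False)). apply (m_empty d mu Hmu).
    intro x; split; [|tauto]. intro hs. specialize (Hx x). specialize (Hnn x).
    assert (Hi : Defs.ind S x = 1) by (unfold Defs.ind; destruct (excluded_middle_informative (S x)); tauto). rewrite Hi in Hx. destruct Hc as [Hc|Hc]; [lra|subst; now elim Hc0]. }
  lra.
Qed.

Lemma integral_ind_ge {Y : Type} (d : Y -> Y -> R) mu G I :
  borel_prob_measure d mu -> borel d G -> is_integral d mu (Defs.ind G) I -> mu G <= I.
Proof.
  intros Hmu HG [p [q [[Hp _] [[_ Hq] ->]]]].
  assert (mu G <= p).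
  { apply Hp. exists ((1, G) :: nil). split. constructor; [simpl; split; [lra|auto]|constructor].
    split. intro x; simpl. pose proof (Rmax_l (Defs.ind G x) 0); lra. simpl; ring. }
  assert (q <= 0).
  { apply Hq. intros v [l [HF [Hx ->]]]. apply (simple_zero d mu l Hmu HF).
    intro x. specialize (Hx x). pose proof (ind_range G x).
    rewrite Rmax_right in Hx by lra. auto. }
  lra.
Qed.

Lemma sum_range_bound (g : nat -> R) K :
  (forall n, 0 <= g n <= 1) -> (forall n, (K <= n)%nat -> g n = 0) ->
  forall len s, sum_range g s len <= INR (K - s).
Proof.
  intros Hg HK. induction len; intro s; unfold sum_range in *; simpl. apply pos_INR.
  specialize (IHlen (S s)). destruct (Compare_dec.le_lt_dec K s).
  - rewrite HK by auto. replace (K - S s)%nat with (K - s)%nat in IHlen by lia. lra.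
  - replace (K - s)%nat with (S (K - S s)) by lia. rewrite S_INR. pose proof (Hg s). lra.
Qed.

Lemma average_pos (g : nat -> R) (a b : nat -> nat) I :
  (forall n, 0 <= g n <= 1) -> folner a b -> 0 < I ->
  Un_cv (fun N => / INR (b N - a N) * sum_range g (a N) (b N - a N)) I ->
  forall K, exists n, (K <= n)%nat /\ g n <> 0.
Proof.
  intros Hg [_ Hf] HI Hcv K. apply NNPP; intro Hn.
  assert (HK : forall n, (K <= n)%nat -> g n = 0) by (intros n h; apply NNPP; intro; apply Hn; eauto).
  destruct (INR_archimed (I/2) (INR K) ltac:(lra)) as [M HM].
  destruct (Hf (S M)) as [N0 HN0]. destruct (Hcv (I/2) ltac:(lra)) as [N1 HN1].
  set (N := max N0 N1). specialize (HN0 N ltac:(lia)). specialize (HN1 N ltac:(lia)).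
  pose proof (sum_range_bound g K Hg HK (b N - a N) (a N)) as Hs.
  assert (INR (K - a N) <= INR K) by (apply le_INR; lia).
  assert (Hl : INR (S M) <= INR (b N - a N)) by (apply le_INR; auto).
  rewrite S_INR in Hl. pose proof (pos_INR M).
  set (L := INR (b N - a N)) in *. set (S0 := sum_range g (a N) (b N - a N)) in *.
  unfold Rdist in HN1. apply Rabs_def2 in HN1. destruct HN1 as [h1 h2].
  assert (HL : 0 < L) by lra.
  assert (S0 = L * (/ L * S0)) by (field; lra).
  assert (L * (I/2) < L * (/L * S0)) by (apply Rmult_lt_compat_l; lra).
  nra.
Qed.

Definition Aset {X : Type} (T : X -> X) (E : X -> Prop) (m : nat -> nat) (i : nat) (p : X * X) : Prop :=
  E (Nat.iter (m i) T (fst p)) /\ E (snd p).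
Definition Uset {X : Type} (T : X -> X) (E : X -> Prop) (m : nat -> nat) (M : nat) (p : X * X) : Prop :=
  exists i, (M <= i)%nat /\ Aset T E m i p.
Definition Lset {X : Type} (T : X -> X) (E : X -> Prop) (m : nat -> nat) (p : X * X) : Prop :=
  forall M, Uset T E m M p.

Lemma A_clopen {X : Type} (d : X -> X -> R) T E m i : tds d T -> is_clopen d E -> is_clopen (dprod d) (Aset T E m i).
Proof.
  intros [_ [_ [HT _]]] HE. unfold Aset. apply clopen_and.
  - apply (clopen_preim d (dprod d) (fun p => Nat.iter (m i) T (fst p))); auto.
    apply (cont_comp (dprod d) d d fst (Nat.iter (m i) T)). apply cont_fst. apply cont_iter; auto.
  - apply (clopen_preim d (dprod d) snd); auto. apply cont_snd.
Qed.

Lemma clopen_borel {Y : Type} (d : Y -> Y -> R) G : is_clopen d G -> borel d G.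
Proof. intros [H _]; apply borel_open; auto. Qed.

Lemma U_borel {X : Type} (d : X -> X -> R) T E m M : tds d T -> is_clopen d E -> borel (dprod d) (Uset T E m M).
Proof. intros HT HE. apply borel_union. intro i. apply borel_andP. apply clopen_borel, A_clopen; auto. Qed.

Lemma L_borel {X : Type} (d : X -> X -> R) T E m : tds d T -> is_clopen d E -> borel (dprod d) (Lset T E m).
Proof. intros HT HE. apply borel_inter. intro M. apply U_borel; auto. Qed.

Lemma L_pos {X : Type} (d : X -> X -> R) T E m nu eps : tds d T -> is_clopen d E ->
  borel_prob_measure (dprod d) nu ->
  (forall i, eps <= nu (fun p => E (Nat.iter (m i) T (fst p)) /\ E (snd p))) ->
  eps <= nu (Lset T E m).
Proof.
  intros HT HE Hnu Heps.
  set (V := fun M p => ~ Uset T E m M p).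
  assert (HV : forall M, borel (dprod d) (V M)) by (intro; apply borel_compl, U_borel; auto).
  assert (Hb : nu (fun p => exists n, V n p) <= 1 - eps).
  { apply m_union_bound with (d := dprod d); auto. intro n.
    apply Rle_trans with (nu (fun p => ~ Aset T E m n p)).
    - apply m_mono with (d := dprod d); auto. apply borel_punion; auto.
      apply borel_compl, clopen_borel, A_clopen; auto.
      intros p [k [hk h]] ha. apply h. exists n; split; auto.
    - rewrite m_compl with (d := dprod d); auto. specialize (Heps n). unfold Aset. lra.
      apply clopen_borel, A_clopen; auto. }
  rewrite (set_ext (Lset T E m) (fun p => ~ exists n, V n p)).
  rewrite m_compl with (d := dprod d). lra. auto. apply borel_union; auto.
  intro p; split. intros h [n hn]; apply hn, h. intros h M. apply NNPP; intro h'; apply h; exists M; auto.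
Qed.

Lemma iter_prod {X : Type} (T : X -> X) n x y : Nat.iter n (Tprod T) (x, y) = (Nat.iter n T x, Nat.iter n T y).
Proof. induction n; simpl; auto. rewrite IHn; reflexivity. Qed.

Lemma eventually_E {X : Type} (d : X -> X -> R) T E m x0 x1 c : tds d T -> is_clopen d E ->
  converges d (fun i => Nat.iter (m i) T x0) x1 -> E (Nat.iter c T x1) ->
  exists M, forall i, (M <= i)%nat -> E (Nat.iter (m i + c) T x0).
Proof.
  intros [[_ [_ [Hsym _]]] [_ [HT _]]] [HEo _] Hcv Hc.
  destruct (HEo _ Hc) as [r [Hr H1]]. destruct (cont_iter d T c HT x1 r Hr) as [dl [Hd H2]].
  destruct (Hcv dl Hd) as [M HM]. exists M. intros i Hi. rewrite Nat.add_comm, Nat.iter_add.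
  apply H1, H2. rewrite Hsym. auto.
Qed.

Lemma eventually_E_list {X : Type} (d : X -> X -> R) T E m x0 x1 Cl : tds d T -> is_clopen d E ->
  converges d (fun i => Nat.iter (m i) T x0) x1 -> (forall c, In c Cl -> E (Nat.iter c T x1)) ->
  exists M, forall i, (M <= i)%nat -> forall c, In c Cl -> E (Nat.iter (m i + c) T x0).
Proof.
  intros HT HE Hcv. induction Cl as [|c Cl IH]; intro H. exists 0%nat; intros i _ c [].
  destruct IH as [M1 H1]. intros; apply H; simpl; auto.
  destruct (eventually_E d T E m x0 x1 c HT HE Hcv) as [M2 H2]. apply H; simpl; auto.
  exists (max M1 M2). intros i Hi c' [<-|h]. apply H2; lia. apply H1; auto; lia.
Qed.

Lemma greedy {X : Type} (d : X -> X -> R) T E m nu G : tds d T -> is_clopen d E ->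
  borel_prob_measure (dprod d) nu -> borel (dprod d) G ->
  0 < nu (fun p => G p /\ Lset T E m p) ->
  forall M, exists i, (M <= i)%nat /\ 0 < nu (fun p => (G p /\ Aset T E m i p) /\ Lset T E m p).
Proof.
  intros HT HE Hnu HG Hpos M. apply NNPP; intro Hn.
  assert (Hz : forall k, nu (fun p => (G p /\ Aset T E m (k + M) p) /\ Lset T E m p) <= 0).
  { intro k. apply Rnot_lt_le. intro h. apply Hn. exists (k + M)%nat; split; auto; lia. }
  pose proof (m_null_union (dprod d) nu (fun k p => (G p /\ Aset T E m (k + M) p) /\ Lset T E m p) Hnu) as Hu.
  assert (Hb : forall k, borel (dprod d) (fun p => (G p /\ Aset T E m (k + M) p) /\ Lset T E m p)).
  { intro k. apply borel_and. apply borel_and; auto. apply clopen_borel, A_clopen; auto. apply L_borel; auto. }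
  specialize (Hu Hb Hz).
  assert (nu (fun p => G p /\ Lset T E m p) <= nu (fun p => exists k, (G p /\ Aset T E m (k + M) p) /\ Lset T E m p)).
  { apply m_mono with (d := dprod d); auto. apply borel_and; auto. apply L_borel; auto. apply borel_union; auto.
    intros p [hg hl]. destruct (hl M) as [i [hi ha]]. exists (i - M)%nat. replace (i - M + M)%nat with i by lia. auto. }
  lra.
Qed.

Lemma hit {X : Type} (d : X -> X -> R) T nu a b x0 x1 G : borel_prob_measure (dprod d) nu ->
  folner a b -> generic (dprod d) (Tprod T) (x0, x1) nu a b ->
  is_clopen (dprod d) G -> 0 < nu G ->
  forall K, exists c, (K <= c)%nat /\ G (Nat.iter c T x0, Nat.iter c T x1).
Proof.
  intros Hnu Hf Hg HG Hpos K.
  destruct (Hg (Defs.ind G) (ind_cont _ G HG)) as [I [HI Hcv]].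
  pose proof (integral_ind_ge _ nu G I Hnu (clopen_borel _ G HG) HI).
  destruct (average_pos (fun n => Defs.ind G (Nat.iter n (Tprod T) (x0, x1))) a b I
     (fun n => ind_range G _) Hf ltac:(lra) Hcv K) as [c [Hc Hn]].
  exists c; split; auto. rewrite <- iter_prod. unfold Defs.ind in Hn.
  destruct (excluded_middle_informative (G (Nat.iter c (Tprod T) (x0, x1)))); auto. lra.
Qed.

Definition Inv {X : Type} (d : X -> X -> R) (T : X -> X) (x0 x1 : X) (E : X -> Prop)
  (nu : (X * X -> Prop) -> R) (m : nat -> nat) (s : (X * X -> Prop) * list nat * list nat) : Prop :=
  let '(G, Bl, Cl) := s in
  is_clopen (dprod d) G /\ 0 < nu (fun p => G p /\ Lset T E m p) /\
  (forall b, In b Bl -> exists i, b = m i) /\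
  (forall p, G p -> forall b, In b Bl -> E (Nat.iter b T (fst p))) /\
  (forall b c, In b Bl -> In c Cl -> E (Nat.iter (b + c) T x0)) /\
  (forall c, In c Cl -> E (Nat.iter c T x1)).

Lemma step {X : Type} (d : X -> X -> R) (T : X -> X) (x0 x1 : X)
  (E : X -> Prop) (nu : (X * X -> Prop) -> R) (a b : nat -> nat) (m : nat -> nat) :
  tds d T -> is_clopen d E -> borel_prob_measure (dprod d) nu -> folner a b ->
  generic (dprod d) (Tprod T) (x0, x1) nu a b ->
  (forall M, exists i0, forall i, (i0 <= i)%nat -> (M <= m i)%nat) ->
  converges d (fun i => Nat.iter (m i) T x0) x1 ->
  forall (s : (X * X -> Prop) * list nat * list nat) (K : nat), exists s',
    Inv d T x0 x1 E nu m s -> Inv d T x0 x1 E nu m s' /\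
    exists i c, s' = ((fun p => fst (fst s) p /\ Aset T E m i p), m i :: snd (fst s), c :: snd s)
      /\ (K <= m i)%nat /\ (K <= c)%nat.
Proof.
  intros HT HE Hnu Hf Hg Hm Hcv [[G Bl] Cl] K.
  destruct (classic (Inv d T x0 x1 E nu m (G, Bl, Cl))) as [HI|HI]; [|exists (G, Bl, Cl); tauto].
  destruct HI as [I1 [I2 [I3 [I4 [I5 I6]]]]].
  destruct (eventually_E_list d T E m x0 x1 Cl HT HE Hcv I6) as [M1 H1].
  destruct (Hm K) as [M2 H2].
  destruct (greedy d T E m nu G HT HE Hnu (clopen_borel _ _ I1) I2 (max M1 M2)) as [i [Hi Hpos]].
  set (G' := fun p => G p /\ Aset T E m i p).
  assert (HG' : is_clopen (dprod d) G') by (apply clopen_and; auto; apply A_clopen; auto).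
  assert (Hpos' : 0 < nu G').
  { eapply Rlt_le_trans. exact Hpos. apply m_mono with (d := dprod d); auto.
    apply borel_and. apply clopen_borel; auto. apply L_borel; auto. apply clopen_borel; auto. intros p [h _]; auto. }
  destruct (hit d T nu a b x0 x1 G' Hnu Hf Hg HG' Hpos' K) as [c [Hc [HcG [HcA1 HcA2]]]].
  exists (G', m i :: Bl, c :: Cl). intros _. split.
  2:{ exists i, c. simpl. repeat split; auto. apply H2; lia. }
  simpl in HcA1, HcA2. simpl.
  split; [auto|]. split; [exact Hpos|]. split; [|split; [|split]].
  - intros b0 [<-|h]; eauto.
  - intros p [hg ha] b0 [<-|h]. apply ha. auto.
  - intros b0 c0 [<-|hb] [<-|hc].
    + rewrite Nat.iter_add; auto.
    + apply H1; auto; lia.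
    + rewrite Nat.iter_add. apply (I4 _ HcG b0 hb).
    + auto.
  - intros c0 [<-|h]; auto.
Qed.

Theorem theorem2 (X : Type) (d : X -> X -> R) (T : X -> X) (x0 x1 : X)
  (E : X -> Prop) (nu : (X * X -> Prop) -> R) (a b : nat -> nat)
  (eps : R) (m : nat -> nat) :
  tds d T ->
  is_clopen d E ->
  borel_prob_measure (dprod d) nu ->
  folner a b ->
  generic (dprod d) (Tprod T) (x0, x1) nu a b ->
  0 < eps ->
  (forall M, exists i0, forall i, (i0 <= i)%nat -> (M <= m i)%nat) ->
  converges d (fun i => Nat.iter (m i) T x0) x1 ->
  (forall i, eps <= nu (fun p => E (Nat.iter (m i) T (fst p)) /\ E (snd p))) ->
  exists B C : nat -> Prop,
    (forall n, exists k, (n <= k)%nat /\ B k) /\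
    (forall n, exists k, (n <= k)%nat /\ C k) /\
    (forall k l, B k -> C l -> E (Nat.iter (k + l) T x0)) /\
    (forall k, B k -> exists i, k = m i) /\
    (forall l, C l -> E (Nat.iter l T x1)).
Proof.
  intros HT HE Hnu Hf Hg Heps Hm Hcv Hmi.
  pose proof (step d T x0 x1 E nu a b m HT HE Hnu Hf Hg Hm Hcv) as Hs.
  set (F := fun s K => proj1_sig (constructive_indefinite_description _ (Hs s K))).
  assert (HF : forall s K, Inv d T x0 x1 E nu m s -> Inv d T x0 x1 E nu m (F s K) /\
    exists i c, F s K = ((fun p => fst (fst s) p /\ Aset T E m i p), m i :: snd (fst s), c :: snd s)
      /\ (K <= m i)%nat /\ (K <= c)%nat).
  { intros s K. unfold F. destruct (constructive_indefinite_description _ (Hs s K)); simpl; auto. }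
  set (st := fix st n := match n with 0%nat => ((fun _ : X * X => True), @nil nat, @nil nat) | S n => F (st n) n end).
  assert (Hinv : forall n, Inv d T x0 x1 E nu m (st n)).
  { induction n.
    - simpl. split; [apply clopen_True|]. split.
      + rewrite (set_ext _ (Lset T E m)) by (intro; tauto).
        pose proof (L_pos d T E m nu eps HT HE Hnu Hmi). lra.
      + repeat split; intros; simpl in *; tauto.
    - simpl. apply HF; auto. }
  assert (Hrel : forall n, exists i c, st (S n) = ((fun p => fst (fst (st n)) p /\ Aset T E m i p), m i :: snd (fst (st n)), c :: snd (st n))
      /\ (n <= m i)%nat /\ (n <= c)%nat).
  { intro n. apply (proj2 (HF (st n) n (Hinv n))). }
  assert (Hmono : forall n k, incl (snd (fst (st n))) (snd (fst (st (k + n)%nat))) /\ incl (snd (st n)) (snd (st (k + n)%nat))).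
  { intros n k. induction k. simpl; split; apply incl_refl.
    destruct IHk as [h1 h2]. destruct (Hrel (k + n)%nat) as [i [c [He _]]].
    replace (S k + n)%nat with (S (k + n)) by lia. rewrite He; simpl.
    split; intros x hx; right; auto. }
  exists (fun k => exists n, In k (snd (fst (st n)))), (fun l => exists n, In l (snd (st n))).
  split; [|split; [|split; [|split]]].
  - intro n. destruct (Hrel n) as [i [c [He [h1 h2]]]]. exists (m i); split; auto. exists (S n). rewrite He; simpl; auto.
  - intro n. destruct (Hrel n) as [i [c [He [h1 h2]]]]. exists c; split; auto. exists (S n). rewrite He; simpl; auto.
  - intros k l [n1 h1] [n2 h2]. set (N := max n1 n2).
    destruct (Hmono n1 (N - n1)%nat) as [g1 _]. destruct (Hmono n2 (N - n2)%nat) as [_ g2].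
    replace (N - n1 + n1)%nat with N in g1 by lia. replace (N - n2 + n2)%nat with N in g2 by lia.
    pose proof (Hinv N) as HI. destruct (st N) as [[G Bl] Cl] eqn:Hst. simpl in g1, g2.
    destruct HI as [_ [_ [_ [_ [I5 _]]]]]. apply I5; auto.
  - intros k [n h]. pose proof (Hinv n) as HI. destruct (st n) as [[G Bl] Cl]. simpl in h.
    destruct HI as [_ [_ [I3 _]]]. auto.
  - intros l [n h]. pose proof (Hinv n) as HI. destruct (st n) as [[G Bl] Cl]. simpl in h.
    destruct HI as [_ [_ [_ [_ [_ I6]]]]]. auto.
Qed.
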